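(* Let $d=m=1$, $n=0$ (state space $\mathbb R_+$), let $\mu=\sum_{n=1}^\infty n^{-2}\delta_n$ (with $\delta_n$ the Dirac measure at $n$), and $\beta_1=\int_0^\infty h(\xi)\,\mu(d\xi)=\sum_{n\ge1}n^{-2}$. Then the parameters $\alpha=(0,0)$, $\beta=(0,\beta_1)$, $\gamma=(0,0)$, $\kappa=(0,\mu)$ are admissible, the associated stochastically continuous affine process satisfies $\int_0^\infty(|\xi|\wedge|\xi|^2)\,\mu(d\xi)=\infty$, and yet it is conservative. In fact $R_0\equiv0$, $R_1(u)=\sum_{n\ge1}(e^{un}-1)/n^2$ for $u\le0$, and $\int_{-1}^{0-}\frac{du}{R_1(u)}=-\infty$.
   Context: For $d=1$, $m=1$: truncation function $h(\xi)=(1\wedge|\xi|)\xi/|\xi|$ for $\xi\ne0$. Admissible parameters $(\alpha,\beta,\gamma,\kappa)$ here consist of $\alpha_0,\alpha_1\ge0$, $\beta_0,\beta_1\in\mathbb R$ with $\beta_0-\int h\,d\kappa_0\ge0$ (and $\int |h|\,d\kappa_0<\infty$), $\gamma_0,\gamma_1\ge0$, and Borel measures $\kappa_0,\kappa_1$ on $(0,\infty)$ with $\int |h|^2 d\kappa_j<\infty$; $R_i(u)=\frac12\alpha_iu^2+\beta_iu-\gamma_i+\int(e^{u\xi}-1-uh(\xi))\kappa_i(d\xi)$. Each admissible parameter set determines a unique stochastically continuous affine Markov process $(X,\mathbb P_x)_{x\in\mathbb R_+}$ (possibly killed, with values in $\mathbb R_+\cup\{\Delta\}$) whose transition function satisfies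 $\int e^{u\xi}p_t(x,d\xi)=\exp(\psi_0(t,u)+\psi(t,u)x)$ with $\partial_t\psi=R_1(\psi)$, $\psi(0,u)=u$, $\partial_t\psi_0=R_0(\psi)$, $\psi_0(0,u)=0$. The process is conservative if $p_t(x,\mathbb R_+)=1$ for all $t,x$. *)

(* Defs.v *)
From Stdlib Require Import Reals.
Open Scope R_scope.

(* Truncation function h(xi) = (1 /\ |xi|) xi/|xi| (d = 1); h 0 = 0 by the
   Stdlib convention x / 0 = 0 * ... (irrelevant: measures live on (0,oo)). *)
Definition h (xi : R) : R := Rmin 1 (Rabs xi) * xi / Rabs xi.

(* The measure mu = sum_{n>=1} n^{-2} delta_n.  Integrals against mu are
   series: int f dmu = sum_{k>=0} f(k+1) / (k+1)^2.  mu_terms f is the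
   sequence of terms of this series. *)
Definition mu_terms (f : R -> R) (k : nat) : R :=
  f (INR (S k)) / (INR (S k)) ^ 2.

Definition mu_integral (f : R -> R) (l : R) : Prop :=
  infinite_sum (mu_terms f) l.

(* int f dmu = +oo for a nonnegative integrand: partial sums diverge to +oo *)
Definition mu_integral_infinite (f : R -> R) : Prop :=
  cv_infty (fun N => sum_f_R0 (mu_terms f) N).

(* Parameters of the example: alpha = (0,0), beta = (0, beta1),
   gamma = (0,0), kappa = (0, mu). *)
Definition alpha0 : R := 0.
Definition alpha1 : R := 0.
Definition beta0 : R := 0.
Definition gamma0 : R := 0.
Definition gamma1 : R := 0.

(* R_0(u) = 1/2 alpha0 u^2 + beta0 u - gamma0 + int (...) dkappa0,
   with kappa0 = 0 so the integral term is 0. *)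
Definition Rfun0 (u : R) : R := / 2 * alpha0 * u ^ 2 + beta0 * u - gamma0 + 0.

(* R1 is the function R_1(u) = 1/2 alpha1 u^2 + beta1 u - gamma1
   + int (e^{u xi} - 1 - u h(xi)) mu(dxi), on u <= 0 (where it is finite). *)
Definition is_R1 (beta1 : R) (R1 : R -> R) : Prop :=
  forall u : R, u <= 0 ->
    mu_integral (fun xi => exp (u * xi) - 1 - u * h xi)
                (R1 u - (/ 2 * alpha1 * u ^ 2 + beta1 * u - gamma1)).

Definition improper_integral_left_neg_infty (f : R -> R) (a b : R) : Prop :=
  (forall e : R, 0 < e < b - a -> inhabited (Riemann_integrable f a (b - e))) /\
  (forall M : R, exists delta : R, 0 < delta /\
     forall e : R, 0 < e < delta -> e < b - a ->
       forall pr : Riemann_integrable f a (b - e), RiemannInt pr < - M).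

(* psi0, psi solve the generalized Riccati equations of the affine process:
   d/dt psi(t,u) = R1(psi(t,u)), psi(0,u) = u, d/dt psi0(t,u) = R0(psi(t,u)),
   psi0(0,u) = 0, for t >= 0 and u <= 0 (right-continuity at t = 0,
   differentiability for t > 0), with psi(t,u) <= 0 (the domain of R1). *)
Definition riccati_solution (R1 : R -> R) (psi0 psi : R -> R -> R) : Prop :=
  forall u : R, u <= 0 ->
    psi 0 u = u /\ psi0 0 u = 0 /\
    (forall t, 0 <= t -> psi t u <= 0) /\
    (forall t, 0 < t -> derivable_pt_lim (fun s => psi s u) t (R1 (psi t u))) /\
    (forall t, 0 < t -> derivable_pt_lim (fun s => psi0 s u) t (Rfun0 (psi t u))) /\
    (forall eps, 0 < eps -> exists delta, 0 < delta /\ forall s, 0 <= s < delta ->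
        Rabs (psi s u - u) < eps /\ Rabs (psi0 s u) < eps).

(* Total mass p_t(x, R_+) = int e^{0 xi} p_t(x, dxi) = exp(psi0(t,0) + psi(t,0) x). *)
Definition total_mass (psi0 psi : R -> R -> R) (t x : R) : R :=
  exp (psi0 t 0 + psi t 0 * x).

(* Main.v *)
Require Import Defs.
From Stdlib Require Import Reals Lra Lia.
From Coquelicot Require Import Coquelicot.
Open Scope R_scope.

Lemma INRS_pos k : 0 < INR (S k).
Proof. apply lt_0_INR; lia. Qed.

Lemma h_nat k : h (INR (S k)) = 1.
Proof.
  unfold h. pose proof (INRS_pos k) as H.
  rewrite Rabs_pos_eq by lra.
  rewrite Rmin_left. field; lra.
  rewrite S_INR. pose proof (pos_INR k). lra.
Qed.

Lemma lim_le (u v : nat -> R) lu lv :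
  Un_cv u lu -> Un_cv v lv -> (forall n, u n <= v n) -> lu <= lv.
Proof.
  intros Hu Hv H.
  apply is_lim_seq_Reals in Hu. apply is_lim_seq_Reals in Hv.
  pose proof (is_lim_seq_le u v lu lv H Hu Hv) as X. simpl in X. auto.
Qed.

Lemma lim_le_c (u : nat -> R) l c :
  Un_cv u l -> (forall n, u n <= c) -> l <= c.
Proof.
  intros Hu H. apply (lim_le u (fun _ => c)); auto.
  apply is_lim_seq_Reals. apply is_lim_seq_const.
Qed.

Lemma lim_ge_c (u : nat -> R) l c :
  Un_cv u l -> (forall n, c <= u n) -> c <= l.
Proof.
  intros Hu H. apply (lim_le (fun _ => c) u); auto.
  apply is_lim_seq_Reals. apply is_lim_seq_const.
Qed.

Lemma ln_le_x1 x : 0 < x -> ln x <= x - 1.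
Proof. intro H. pose proof (exp_ineq1_le (ln x)) as X. rewrite exp_ln in X; lra. Qed.

Lemma sum_mono (a : nat -> R) m p : (forall k, 0 <= a k) ->
  sum_f_R0 a m <= sum_f_R0 a (m + p).
Proof.
  intro H. induction p. rewrite Nat.add_0_r; lra.
  rewrite Nat.add_succ_r. simpl. pose proof (H (S (m + p))). lra.
Qed.

Lemma sum_le_first (a : nat -> R) m : (forall k, a k <= 0) ->
  sum_f_R0 a m <= a 0%nat.
Proof.
  intro H. induction m. simpl; lra. simpl. pose proof (H (S m)). lra.
Qed.

Lemma harm_up n : sum_f_R0 (fun k => / INR (S k)) n <= 1 + ln (INR (S n)).
Proof.
  induction n. simpl. rewrite ln_1. lra.
  rewrite tech5.
  pose proof (INRS_pos n) as Hp.
  pose proof (INRS_pos (S n)) as Hp2.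
  assert (E: INR (S (S n)) = INR (S n) + 1) by (rewrite (S_INR (S n)); reflexivity).
  assert (Hl := ln_le_x1 (INR (S n) / INR (S (S n))) ltac:(apply Rdiv_lt_0_compat; lra)).
  rewrite ln_div in Hl by lra.
  enough (INR (S n) / INR (S (S n)) - 1 = - / INR (S (S n))) by lra.
  rewrite E. field. lra.
Qed.

Lemma harm_low n : ln (INR (S (S n))) <= sum_f_R0 (fun k => / INR (S k)) n.
Proof.
  induction n. simpl. 
  pose proof (ln_le_x1 2 ltac:(lra)). replace (1+1) with 2 by lra. lra.
  rewrite tech5.
  pose proof (INRS_pos n) as Hp.
  pose proof (INRS_pos (S n)) as Hp2.
  assert (E: INR (S (S (S n))) = INR (S (S n)) + 1) by (rewrite (S_INR (S (S n))); reflexivity).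
  assert (Hl := ln_le_x1 (INR (S (S (S n))) / INR (S (S n))) ltac:(apply Rdiv_lt_0_compat; lra)).
  rewrite ln_div in Hl by lra.
  enough (INR (S (S (S n))) / INR (S (S n)) - 1 = / INR (S (S n))) by lra.
  rewrite E. field. lra.
Qed.

Definition T (u : R) (k : nat) : R := mu_terms (fun xi => exp (u * xi) - 1) k.

Lemma R1_ser beta1 R1 : mu_integral h beta1 -> is_R1 beta1 R1 ->
  forall u, u <= 0 -> infinite_sum (T u) (R1 u).
Proof.
  intros Hh HR u Hu.
  pose proof (HR u Hu) as A. unfold mu_integral in *.
  apply is_series_Reals in A. apply is_series_Reals in Hh.
  pose proof (is_series_plus _ _ _ _ A (is_series_scal u _ _ Hh)) as B.
  apply is_series_Reals.
  replace (R1 u) with (plus (R1 u - (/ 2 * alpha1 * u ^ 2 + beta1 * u - gamma1)) (scal u beta1)).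
  2:{ unfold plus, scal; simpl. unfold mult; simpl. unfold alpha1, gamma1. ring. }
  eapply is_series_ext; [|exact B].
  intro n. unfold T, mu_terms. pose proof (INRS_pos n). set (x := INR (S n)) in *.
  unfold plus, scal; simpl. unfold mult; simpl. field. lra.
Qed.

Lemma T_nonpos u k : u <= 0 -> T u k <= 0.
Proof.
  intro Hu. unfold T, mu_terms. pose proof (INRS_pos k). set (x := INR (S k)) in *.
  assert (exp (u * x) <= 1).
  { rewrite <- exp_0. assert (Hux : u * x <= 0) by nra.
    destruct (Rle_lt_or_eq_dec (u*x) 0 Hux) as [E|E].
    left; apply exp_increasing; auto. rewrite E; lra. }
  apply Rmult_le_0_r. lra. left. apply Rinv_0_lt_compat. apply pow_lt. lra.
Qed.

Lemma R1_le_T0 beta1 R1 : mu_integral h beta1 -> is_R1 beta1 R1 ->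
  forall u, u <= 0 -> R1 u <= T u 0.
Proof.
  intros Hh HR u Hu. apply (lim_le_c (sum_f_R0 (T u))).
  apply (R1_ser beta1 R1 Hh HR u Hu).
  intro n. apply sum_le_first. intro k. apply T_nonpos; auto.
Qed.

Lemma T0_neg u : u < 0 -> T u 0 < 0.
Proof.
  intro Hu. unfold T, mu_terms. change (INR (S 0)) with 1.
  assert (exp (u * 1) < 1). { rewrite Rmult_1_r, <- exp_0. apply exp_increasing. lra. }
  replace ((1:R) ^ 2) with 1 by ring. unfold Rdiv. rewrite Rinv_1. lra.
Qed.

Lemma sum_opp_eq (a : nat -> R) m : sum_f_R0 (fun k => - a k) m = - sum_f_R0 a m.
Proof. induction m. simpl; ring. rewrite !tech5. rewrite IHm. ring. Qed.

Lemma key_bound beta1 R1 : mu_integral h beta1 -> is_R1 beta1 R1 ->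
  forall v, 0 < v <= 1 -> - R1 (- v) <= v * (3 - ln v).
Proof.
  intros Hh HR v Hv.
  destruct (nfloor_ex (/ v)) as [N0 HN0]. { left. apply Rinv_0_lt_compat; lra. }
  assert (Hiv : 1 <= / v). { rewrite <- Rinv_1. apply Rinv_le_contravar; lra. }
  destruct N0 as [|n]. { simpl in HN0. lra. }
  set (c := fun k => if Nat.ltb k (S n) then v / INR (S k) else / (INR k * INR (S k))).
  set (H := sum_f_R0 (fun k => / INR (S k)) n).
  assert (Htc : forall k, - c k <= T (- v) k).
  { intro k. unfold c, T, mu_terms. pose proof (INRS_pos k) as Hx.
    pose proof (exp_ineq1_le (- v * INR (S k))) as E1.
    pose proof (exp_pos (- v * INR (S k))) as E2.
    destruct (Nat.ltb_spec k (S n)).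
    - set (x := INR (S k)) in *.
      assert (Hx2: 0 < x ^ 2) by (apply pow_lt; lra).
      apply (Rmult_le_reg_r (x^2)); auto.
      unfold Rdiv. rewrite Rmult_assoc, Rinv_l by lra.
      replace (- (v * / x) * x ^ 2) with (- v * x) by (field; lra). lra.
    - assert (Hk : 0 < INR k). { apply lt_0_INR. lia. }
      rewrite (S_INR k) in *. set (x := INR k) in *.
      assert (Hx2: 0 < (x+1) ^ 2) by (apply pow_lt; lra).
      assert (/ (x * (x+1)) >= / (x+1)^2).
      { apply Rle_ge, Rinv_le_contravar. nra. nra. }
      assert ((exp (- v * (x + 1)) - 1) / (x + 1) ^ 2 >= - / (x + 1) ^ 2).
      { unfold Rdiv. assert (0 < / (x+1)^2) by (apply Rinv_0_lt_compat; lra). nra. }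
      lra. }
  assert (Hbase : forall m, (m <= n)%nat -> sum_f_R0 c m = v * sum_f_R0 (fun k => / INR (S k)) m).
  { induction m; intro Hm.
    - simpl. unfold c. simpl. unfold Rdiv. ring.
    - rewrite !tech5. rewrite IHm by lia. unfold c.
      destruct (Nat.ltb_spec (S m) (S n)); [|lia]. unfold Rdiv; ring. }
  assert (Hj : forall j, sum_f_R0 c (n + j) = v * H + / INR (S n) - / INR (S (n + j))).
  { induction j.
    - rewrite Nat.add_0_r. rewrite Hbase by lia. unfold H. ring.
    - rewrite Nat.add_succ_r, tech5, IHj. unfold c.
      destruct (Nat.ltb_spec (S (n + j)) (S n)); [lia|].
      pose proof (INRS_pos (n + j)). rewrite (S_INR (S (n+j))). field. lra. }
  assert (Hsum : forall m, - (v * H + / INR (S n)) <= sum_f_R0 (T (- v)) m).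
  { intro m.
    assert (Hc0 : forall k, 0 <= c k).
    { intro k. unfold c. pose proof (INRS_pos k).
      destruct (Nat.ltb k (S n)). unfold Rdiv. left. apply Rmult_lt_0_compat; [lra|]. apply Rinv_0_lt_compat; lra.
      destruct k. simpl. rewrite Rmult_0_l, Rinv_0; lra.
      left. apply Rinv_0_lt_compat. pose proof (INRS_pos k). nra. }
    assert (sum_f_R0 (fun k => - c k) m <= sum_f_R0 (T (-v)) m).
    { apply sum_Rle. intros; apply Htc. }
    rewrite sum_opp_eq in H0.
    pose proof (sum_mono c m n Hc0). rewrite Nat.add_comm, Hj in H1.
    pose proof (INRS_pos (n + m)).
    assert (0 < / INR (S (n+m))) by (apply Rinv_0_lt_compat; lra). lra. }
  assert (HR1 : - (v * H + / INR (S n)) <= R1 (- v)).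
  { apply (lim_ge_c (sum_f_R0 (T (-v)))); auto. apply (R1_ser beta1 R1 Hh HR); lra. }
  assert (HH : H <= 1 + ln (INR (S n))) by apply harm_up.
  assert (Hln : ln (INR (S n)) <= - ln v).
  { rewrite <- ln_Rinv by lra. destruct (proj1 HN0) as [L|L].
    left. apply ln_increasing; auto. apply INRS_pos. rewrite L; lra. }
  assert (HN : / INR (S n) <= 2 * v).
  { pose proof (INRS_pos n).
    assert (1 < v * (INR (S n) + 1)).
    { destruct HN0 as [_ HN1]. apply (Rmult_lt_compat_l v) in HN1; [|lra].
      rewrite Rinv_r in HN1; lra. }
    assert (1 <= INR (S n)). { rewrite S_INR. pose proof (pos_INR n). lra. }
    apply (Rmult_le_reg_r (INR (S n))); auto. rewrite Rinv_l by lra. nra. }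
  nra.
Qed.

Lemma tail_bound (a b : nat -> R) la lb n :
  infinite_sum a la -> infinite_sum b lb -> (forall k, Rabs (a k) <= b k) ->
  Rabs (la - sum_f_R0 a n) <= lb - sum_f_R0 b n.
Proof.
  intros Ha Hb Hab.
  assert (Sa : Un_cv (fun m => sum_f_R0 a (m + n)) la).
  { apply is_lim_seq_Reals. apply (is_lim_seq_incr_n (sum_f_R0 a) n la).
    apply is_lim_seq_Reals. exact Ha. }
  assert (Sb : Un_cv (fun m => sum_f_R0 b (m + n)) lb).
  { apply is_lim_seq_Reals. apply (is_lim_seq_incr_n (sum_f_R0 b) n lb).
    apply is_lim_seq_Reals. exact Hb. }
  assert (L1 : la - lb <= sum_f_R0 a n - sum_f_R0 b n).
  { apply (lim_le_c (fun m => sum_f_R0 a (m + n) - sum_f_R0 b (m + n))).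
    apply CV_minus; auto.
    intro m. induction m. simpl. lra.
    simpl (S m + n)%nat. rewrite !tech5. pose proof (Hab (S (m + n))).
    pose proof (Rle_abs (a (S (m + n)))). lra. }
  assert (L2 : - la - lb <= - sum_f_R0 a n - sum_f_R0 b n).
  { apply (lim_le_c (fun m => - sum_f_R0 a (m + n) - sum_f_R0 b (m + n))).
    apply CV_minus; auto. apply CV_opp; auto.
    intro m. induction m. simpl. lra.
    simpl (S m + n)%nat. rewrite !tech5. pose proof (Hab (S (m + n))).
    pose proof (Rle_abs (- a (S (m + n)))). rewrite Rabs_Ropp in H0. lra. }
  unfold Rabs. destruct (Rcase_abs _); lra.
Qed.

Lemma T_cont u k : continuity_pt (fun y => T (y - 1) k) u.
Proof. unfold T, mu_terms. reg. Qed.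

Require Import Stdlib.Logic.FunctionalExtensionality.

Lemma R1_cont beta1 R1 : infinite_sum (fun k => / (INR (S k)) ^ 2) beta1 ->
  mu_integral h beta1 -> is_R1 beta1 R1 ->
  forall x, -2 < x < 0 -> continuity_pt R1 x.
Proof.
  intros Hb Hh HR x Hx.
  set (r1 := mkposreal 1 Rlt_0_1).
  set (fn := fun n y => sum_f_R0 (T (y - 1)) n).
  assert (HC : CVU fn (fun y => R1 (y - 1)) 0 r1).
  { intros eps Heps. destruct (Hb eps Heps) as [N HN]. exists N.
    intros n y Hn Hy. unfold Boule in Hy. simpl in Hy.
    rewrite Rminus_0_r in Hy. apply Rabs_def2 in Hy.
    assert (Ht := tail_bound (T (y - 1)) (fun k => / INR (S k) ^ 2) (R1 (y - 1)) beta1 n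
      ltac:(apply (R1_ser beta1 R1 Hh HR); lra) Hb).
    assert (Hab : forall k, Rabs (T (y - 1) k) <= / INR (S k) ^ 2).
    { intro k. pose proof (T_nonpos (y - 1) k ltac:(lra)) as T1.
      rewrite Rabs_left1 by lra. unfold T, mu_terms.
      pose proof (INRS_pos k). set (z := INR (S k)) in *.
      pose proof (exp_pos ((y - 1) * z)).
      assert (0 < / z ^ 2) by (apply Rinv_0_lt_compat, pow_lt; lra).
      unfold Rdiv. nra. }
    specialize (Ht Hab). specialize (HN n Hn). unfold Rdist in HN.
    unfold fn. apply Rabs_def2 in HN. eapply Rle_lt_trans; [exact Ht|]. lra. }
  assert (Hfn : forall n y, Boule 0 r1 y -> continuity_pt (fn n) y).
  { intros n y _. induction n.
    - unfold fn. simpl. apply T_cont.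
    - unfold fn. simpl. apply (continuity_pt_plus (fun y => sum_f_R0 (T (y - 1)) n)
         (fun y => T (y - 1) (S n))); auto. apply T_cont. }
  assert (Hc := CVU_continuity fn (fun y => R1 (y - 1)) 0 r1 HC Hfn (x + 1)).
  assert (Hb1 : Boule 0 r1 (x + 1)).
  { unfold Boule. simpl. rewrite Rminus_0_r. apply Rabs_def1; lra. }
  specialize (Hc Hb1).
  assert (Hcomp := continuity_pt_comp (fun x => x + 1) (fun y => R1 (y - 1)) x
    ltac:(reg) Hc).
  replace R1 with (comp (fun y => R1 (y - 1)) (fun x => x + 1)); auto.
  apply functional_extensionality. intro z. unfold comp. f_equal. ring.
Qed.

Lemma dF x : x < 0 -> -x <= 1 ->
  is_derive (fun u => - ln (3 - ln (- u))) x (- / ((- x) * (3 - ln (- x)))).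
Proof.
  intros H1 H2.
  assert (ln (-x) <= 0). { rewrite <- ln_1. destruct H2 as [H2|H2]. left; apply ln_increasing; lra. rewrite H2; lra. }
  auto_derive. split. lra. split. lra. auto.
  field. lra.
Qed.

Lemma g_cont x : x < 0 -> -x <= 1 ->
  continuous (fun u => - / ((- u) * (3 - ln (- u)))) x.
Proof.
  intros H1 H2. apply (ex_derive_continuous (K := R_AbsRing) (V := R_NormedModule)).
  assert (ln (-x) <= 0). { rewrite <- ln_1. destruct H2 as [H2|H2]. left; apply ln_increasing; lra. rewrite H2; lra. }
  auto_derive. repeat split; try lra. apply Rmult_integral_contrapositive; lra.
Qed.

Lemma R1_neg beta1 R1 : mu_integral h beta1 -> is_R1 beta1 R1 ->
  forall u, u < 0 -> R1 u < 0.
Proof.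
  intros Hh HR u Hu. pose proof (R1_le_T0 beta1 R1 Hh HR u ltac:(lra)).
  pose proof (T0_neg u Hu). lra.
Qed.

Lemma integral_part beta1 R1 : infinite_sum (fun k => / (INR (S k)) ^ 2) beta1 ->
  mu_integral h beta1 -> is_R1 beta1 R1 ->
  improper_integral_left_neg_infty (fun u => / R1 u) (-1) 0.
Proof.
  intros Hb Hh HR. split.
  - intros e He. constructor. apply continuity_implies_RiemannInt. lra.
    intros x Hx. apply (continuity_pt_inv R1).
    apply (R1_cont beta1 R1 Hb Hh HR). lra.
    pose proof (R1_neg beta1 R1 Hh HR x ltac:(lra)). lra.
  - intro M. exists (exp (3 - exp (M + ln 3))). split. apply exp_pos.
    intros e He He1 pr.
    set (g := fun u => - / ((- u) * (3 - ln (- u)))).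
    set (F := fun u => - ln (3 - ln (- u))).
    assert (Hg : is_RInt g (-1) (0 - e) (minus (F (0 - e)) (F (-1)))).
    { apply (is_RInt_derive (V := R_CompleteNormedModule) F g).
      - intros x Hx. rewrite Rmin_left in Hx by lra. rewrite Rmax_right in Hx by lra.
        apply dF; lra.
      - intros x Hx. rewrite Rmin_left in Hx by lra. rewrite Rmax_right in Hx by lra.
        apply g_cont; lra. }
    rewrite <- (RInt_Reals _ _ _ pr).
    assert (Hle : RInt (fun u => / R1 u) (-1) (0 - e) <= RInt g (-1) (0 - e)).
    { apply RInt_le. lra. apply ex_RInt_Reals_1; exact pr. eexists; exact Hg.
      intros x Hx. unfold g.
      pose proof (R1_neg beta1 R1 Hh HR x ltac:(lra)).
      pose proof (key_bound beta1 R1 Hh HR (- x) ltac:(lra)).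
      rewrite Ropp_involutive in H0.
      assert (Hl : ln (-x) <= 0). { rewrite <- ln_1. left; apply ln_increasing; lra. }
      assert (0 < - x * (3 - ln (- x))) by nra.
      replace (/ R1 x) with (- / (- R1 x)) by (field; lra).
      apply Ropp_le_contravar. apply Rinv_le_contravar; lra. }
    rewrite (is_RInt_unique _ _ _ _ Hg) in Hle.
    unfold minus, plus, opp in Hle; simpl in Hle. unfold F in Hle.
    replace (- (0 - e)) with e in Hle by ring.
    replace (- -1) with 1 in Hle by ring. rewrite ln_1 in Hle.
    destruct He as [He0 He].
    assert (Hlne : ln e < 3 - exp (M + ln 3)).
    { rewrite <- (ln_exp (3 - exp (M + ln 3))). apply ln_increasing; auto. }
    pose proof (exp_pos (M + ln 3)).
    assert (M + ln 3 < ln (3 - ln e)).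
    { rewrite <- (ln_exp (M + ln 3)). apply ln_increasing; lra. }
    replace (3 - 0) with 3 in Hle by ring. lra.
Qed.


Section ODE.
Variable R1 : R -> R.
Variable p : R -> R.
Hypothesis HR1neg : forall u, u <= 0 -> R1 u <= 0.
Hypothesis Hkey : forall v, 0 < v <= 1 -> - R1 (- v) <= v * (3 - ln v).
Hypothesis Hp0 : p 0 = 0.
Hypothesis Hpn : forall t, 0 <= t -> p t <= 0.
Hypothesis Hd : forall t, 0 < t -> derivable_pt_lim p t (R1 (p t)).
Hypothesis Hrc : forall eps, 0 < eps -> exists delta, 0 < delta /\ forall s, 0 <= s < delta -> Rabs (p s - 0) < eps.

Lemma p_cont t : 0 < t -> continuity_pt p t.
Proof.
  intro Ht. apply continuity_pt_filterlim.
  apply (ex_derive_continuous (K := R_AbsRing) (V := R_NormedModule)).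
  exists (R1 (p t)). apply is_derive_Reals. auto.
Qed.

Lemma p_mono a b : 0 < a <= b -> p b <= p a.
Proof.
  intro Hab.
  destruct (MVT_gen p a b (fun t => R1 (p t))) as [c [Hc E]].
  - intros x Hx. rewrite Rmin_left in Hx by lra. rewrite Rmax_right in Hx by lra.
    apply is_derive_Reals. apply Hd. lra.
  - intros x Hx. rewrite Rmin_left in Hx by lra. rewrite Rmax_right in Hx by lra.
    apply p_cont. lra.
  - rewrite Rmin_left in Hc by lra. rewrite Rmax_right in Hc by lra.
    assert (R1 (p c) <= 0) by (apply HR1neg, Hpn; lra).
    assert (R1 (p c) * (b - a) <= 0) by nra. lra.
Qed.

Lemma p_ivt t1 y : 0 < t1 -> p t1 < y < 0 -> exists s, 0 < s <= t1 /\ p s = y.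
Proof.
  intros Ht1 Hy.
  destruct (Hrc (- y) ltac:(lra)) as [delta [Hdel Hs]].
  set (e := Rmin delta t1 / 2).
  assert (He : 0 < e < t1 /\ e < delta).
  { unfold e. pose proof (Rmin_l delta t1). pose proof (Rmin_r delta t1).
    assert (0 < Rmin delta t1) by (apply Rmin_glb_lt; lra). lra. }
  specialize (Hs e ltac:(lra)). rewrite Rminus_0_r in Hs. apply Rabs_def2 in Hs.
  destruct (Ranalysis5.IVT_interv (fun t => y - p t) e t1) as [z [Hz Ez]].
  - intros a Ha. apply continuity_pt_minus. apply continuity_pt_const. intros u v; auto.
    apply p_cont; lra.
  - lra.
  - lra.
  - lra.
  - exists z. split. lra. lra.
Qed.

Definition Hf (t : R) : R := ln (3 - ln (- p t)) + t.
Definition dHf (t : R) : R := R1 (p t) * (- / (p t) / (3 - ln (- p t))) + 1.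

Lemma Hf_deriv t : 0 < t -> -1 <= p t < 0 -> is_derive Hf t (dHf t).
Proof.
  intros Ht Hpt.
  assert (Hl : ln (- p t) <= 0).
  { rewrite <- ln_1. destruct (Req_dec (p t) (-1)) as [E|E]. rewrite E. replace (- -1) with 1 by ring; lra.
    left; apply ln_increasing; lra. }
  assert (D0 : is_derive (fun w => ln (3 - ln (- w))) (p t) (- / (p t) / (3 - ln (- p t)))).
  { auto_derive. repeat split; lra. field. lra. }
  assert (D1 := is_derive_comp (fun w => ln (3 - ln (- w))) p t _ _ D0 (proj2 (is_derive_Reals _ _ _) (Hd t Ht))).
  assert (D2 := is_derive_plus _ _ _ _ _ D1 (is_derive_id t)).
  unfold Hf, dHf. simpl in D2. unfold scal, plus, one in D2; simpl in D2. unfold mult in D2; simpl in D2.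
  exact D2.
Qed.

Lemma p_zero t : 0 <= t -> p t = 0.
Proof.
  intro Ht. destruct (Rle_lt_or_eq_dec _ _ (Hpn t Ht)) as [Hlt|Heq]; auto.
  exfalso. set (t1 := t) in *.
  assert (Ht1 : 0 < t1). { destruct Ht as [Ht|Ht]; auto. subst t1. rewrite <- Ht, Hp0 in Hlt. lra. }
  set (c0 := Rmax (p t1) (-1) / 2).
  assert (Hc0 : p t1 < c0 < 0 /\ -1 <= c0).
  { unfold c0. pose proof (Rmax_l (p t1) (-1)). pose proof (Rmax_r (p t1) (-1)).
    destruct (Rle_dec (p t1) (-1)).
    rewrite Rmax_right by lra. lra. rewrite Rmax_left by lra. lra. }
  destruct (p_ivt t1 c0 Ht1 (proj1 Hc0)) as [t2 [Ht2 Ept2]].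
  set (K := ln (3 - ln (- c0)) + t2 + 1).
  set (dv := Rmin (- c0 / 2) (exp (3 - exp K))).
  assert (Hdv : 0 < dv <= - c0 / 2 /\ dv <= exp (3 - exp K)).
  { unfold dv. split; [split|]. apply Rmin_glb_lt. lra. apply exp_pos. apply Rmin_l. apply Rmin_r. }
  destruct (p_ivt t2 (- dv) (proj1 Ht2) ltac:(rewrite Ept2; lra)) as [s [Hs Eps]].
  destruct (MVT_gen Hf s t2 dHf) as [c [Hc E]].
  - intros x Hx. rewrite Rmin_left in Hx by lra. rewrite Rmax_right in Hx by lra.
    apply Hf_deriv. lra.
    pose proof (p_mono s x ltac:(lra)). pose proof (p_mono x t2 ltac:(lra)). lra.
  - intros x Hx. rewrite Rmin_left in Hx by lra. rewrite Rmax_right in Hx by lra.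
    apply continuity_pt_filterlim.
    apply (ex_derive_continuous (K := R_AbsRing) (V := R_NormedModule)).
    exists (dHf x). apply Hf_deriv. lra.
    pose proof (p_mono s x ltac:(lra)). pose proof (p_mono x t2 ltac:(lra)). lra.
  - rewrite Rmin_left in Hc by lra. rewrite Rmax_right in Hc by lra.
    assert (Hpc : c0 <= p c <= - dv).
    { pose proof (p_mono s c ltac:(lra)). pose proof (p_mono c t2 ltac:(lra)). lra. }
    assert (Hd0 : 0 <= dHf c).
    { unfold dHf. set (w := - p c).
      assert (Hw : 0 < w <= 1) by (unfold w; lra).
      pose proof (Hkey w Hw) as Kw. replace (- w) with (p c) in Kw by (unfold w; ring).
      assert (Hl : ln w <= 0).
      { rewrite <- ln_1. destruct (proj2 Hw) as [A|A]. left; apply ln_increasing; lra. rewrite A; lra. }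
      replace (- p c) with w by reflexivity.
      replace (p c) with (- w) by (unfold w; ring).
      replace (- R1 (- w)) with (- R1 (p c)) in Kw by (unfold w; rewrite Ropp_involutive; reflexivity).
      replace (R1 (- w)) with (R1 (p c)) by (unfold w; rewrite Ropp_involutive; reflexivity).
      assert (0 < w * (3 - ln w)) by nra.
      replace (R1 (p c) * (- / - w / (3 - ln w)) + 1) with (1 - (- R1 (p c)) / (w * (3 - ln w)))
        by (field; lra).
      assert ((- R1 (p c)) / (w * (3 - ln w)) <= 1).
      { apply (Rmult_le_reg_r (w * (3 - ln w))); auto. unfold Rdiv. rewrite Rmult_assoc, Rinv_l by lra. lra. }
      lra. }
    assert (Hf t2 - Hf s >= 0) by (rewrite E; nra).
    unfold Hf in H. rewrite Ept2, Eps in H. rewrite Ropp_involutive in H.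
    assert (Hlnd : ln dv <= 3 - exp K).
    { rewrite <- (ln_exp (3 - exp K)). destruct (proj2 Hdv) as [A|A].
      left; apply ln_increasing; lra. rewrite A; lra. }
    pose proof (exp_pos K).
    assert (K <= ln (3 - ln dv)).
    { rewrite <- (ln_exp K). destruct (Rle_lt_or_eq_dec (exp K) (3 - ln dv) ltac:(lra)) as [A|A].
      left; apply ln_increasing; lra. rewrite A; lra. }
    unfold K in H1. lra.
Qed.
End ODE.

Lemma q_zero (q : R -> R) : q 0 = 0 ->
  (forall t, 0 < t -> derivable_pt_lim q t 0) ->
  (forall eps, 0 < eps -> exists delta, 0 < delta /\ forall s, 0 <= s < delta -> Rabs (q s) < eps) ->
  forall t, 0 <= t -> q t = 0.
Proof.
  intros H0 Hd Hrc t Ht. destruct Ht as [Ht|Ht]; [|subst; auto].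
  assert (Hc : forall a b, 0 < a <= b -> q b = q a).
  { intros a b Hab. destruct (MVT_gen q a b (fun _ => 0)) as [c [Hc E]].
    - intros x Hx. rewrite Rmin_left in Hx by lra. rewrite Rmax_right in Hx by lra.
      apply is_derive_Reals. apply Hd. lra.
    - intros x Hx. rewrite Rmin_left in Hx by lra. rewrite Rmax_right in Hx by lra.
      apply continuity_pt_filterlim.
      apply (ex_derive_continuous (K := R_AbsRing) (V := R_NormedModule)).
      exists 0. apply is_derive_Reals. apply Hd. lra.
    - lra. }
  destruct (Req_dec (q t) 0) as [E|E]; auto. exfalso.
  destruct (Hrc (Rabs (q t)) ltac:(apply Rabs_pos_lt; auto)) as [delta [Hdel Hs]].
  set (e := Rmin delta t / 2).
  assert (He : 0 < e < t /\ e < delta).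
  { unfold e. pose proof (Rmin_l delta t). pose proof (Rmin_r delta t).
    assert (0 < Rmin delta t) by (apply Rmin_glb_lt; lra). lra. }
  specialize (Hs e ltac:(lra)). rewrite <- (Hc e t) in Hs by lra. lra.
Qed.

Theorem mainTheorem3 :
  forall (beta1 : R),
    infinite_sum (fun k => / (INR (S k)) ^ 2) beta1 ->
    mu_integral h beta1 ->
  forall (Rfun1 : R -> R), is_R1 beta1 Rfun1 ->
  (* admissibility of (alpha, beta, gamma, kappa) *)
  (0 <= alpha0 /\ 0 <= alpha1 /\ beta0 - 0 >= 0 /\ 0 <= gamma0 /\ 0 <= gamma1 /\
   exists l, mu_integral (fun xi => (Rabs (h xi)) ^ 2) l) /\
  (* int (|xi| /\ |xi|^2) mu(dxi) = oo *)
  mu_integral_infinite (fun xi => Rmin (Rabs xi) (Rabs xi ^ 2)) /\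
  (* R_0 = 0 *)
  (forall u, Rfun0 u = 0) /\
  (* R_1(u) = sum_n (e^{un} - 1)/n^2 for u <= 0 *)
  (forall u, u <= 0 -> mu_integral (fun xi => exp (u * xi) - 1) (Rfun1 u)) /\
  (* int_{-1}^{0-} du / R_1(u) = -oo *)
  improper_integral_left_neg_infty (fun u => / Rfun1 u) (-1) 0 /\
  (* conservativeness: p_t(x, R_+) = 1 for all t, x >= 0 *)
  (forall psi0 psi : R -> R -> R, riccati_solution Rfun1 psi0 psi ->
     forall t x, 0 <= t -> 0 <= x -> total_mass psi0 psi t x = 1).
Proof.
  intros beta1 Hb Hh R1 HR.
  split; [|split; [|split; [|split; [|split]]]].
  - unfold alpha0, alpha1, beta0, gamma0, gamma1. repeat split; try lra.
    exists beta1. unfold mu_integral. apply is_series_Reals.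
    apply is_series_Reals in Hb. eapply is_series_ext; [|exact Hb].
    intro n. unfold mu_terms. rewrite h_nat, Rabs_R1. rewrite pow1. unfold Rdiv. rewrite Rmult_1_l. reflexivity.
  - intro M. destruct (nfloor_ex (exp M)) as [N HN]. { left; apply exp_pos. }
    exists N. intros n Hn.
    assert (Eq : sum_f_R0 (mu_terms (fun xi => Rmin (Rabs xi) (Rabs xi ^ 2))) n
                 = sum_f_R0 (fun k => / INR (S k)) n).
    { apply sum_eq. intros k _. unfold mu_terms. pose proof (INRS_pos k).
      assert (1 <= INR (S k)). { rewrite S_INR. pose proof (pos_INR k). lra. }
      rewrite Rabs_pos_eq by lra. rewrite Rmin_left by nra. field. lra. }
    rewrite Eq. eapply Rlt_le_trans; [|apply harm_low].
    rewrite <- (ln_exp M) at 1. apply ln_increasing. apply exp_pos.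
    assert (INR N <= INR n) by (apply le_INR; lia).
    rewrite !S_INR. lra.
  - intro u. unfold Rfun0, alpha0, beta0, gamma0. ring.
  - intros u Hu. apply (R1_ser beta1 R1 Hh HR u Hu).
  - apply (integral_part beta1 R1 Hb Hh HR).
  - intros psi0 psi Hric t x Ht Hx. unfold total_mass.
    destruct (Hric 0 (Rle_refl 0)) as [P0 [Q0 [Pn [Pd [Qd Rc]]]]].
    assert (Hp : psi t 0 = 0).
    { apply (p_zero R1 (fun s => psi s 0)); auto.
      - intros u Hu. pose proof (R1_le_T0 beta1 R1 Hh HR u Hu). pose proof (T_nonpos u 0 Hu). lra.
      - apply (key_bound beta1 R1 Hh HR).
      - intros eps Heps. destruct (Rc eps Heps) as [d [Hd Hs]]. exists d. split; auto.
        intros s Hs'. apply (Hs s Hs'). }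
    assert (Hq : psi0 t 0 = 0).
    { apply (q_zero (fun s => psi0 s 0)); auto.
      - intros s Hs. pose proof (Qd s Hs) as D.
        replace (Rfun0 (psi s 0)) with 0 in D by (unfold Rfun0, alpha0, beta0, gamma0; ring). exact D.
      - intros eps Heps. destruct (Rc eps Heps) as [d [Hd Hs]]. exists d. split; auto.
        intros s Hs'. apply (Hs s Hs'). }
    rewrite Hp, Hq. replace (0 + 0 * x) with 0 by ring. apply exp_0.
Qed.
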